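(* Consider a radial three-phase distribution grid on buses $\{0,\ldots,N\}$ (feeder bus $0$, each bus $n\geq1$ with parent $\pi_n<n$, line $n$ joining $\pi_n$ and $n$), with symmetric phase impedance matrices $\mathbf{Z}_n=\mathbf{Z}_n^{\top}\in\mathbb{C}^{3\times3}$, and let $\mathbf{X}:=2\mathbf{M}\,\mathrm{bdiag}(\{\mathrm{Im}[\tilde{\mathbf{Z}}_n]\})\mathbf{M}^{\top}\in\mathbb{R}^{3N\times3N}$, assumed invertible. Let $\mathbf{U}\mathbf{\Lambda}\mathbf{U}^{\top}$ be an eigenvalue decomposition of $\mathbf{X}\mathbf{X}^{\top}$ ($\mathbf{U}$ orthogonal, $\mathbf{\Lambda}$ diagonal with positive entries). If \[\mu\in\left(0,\ \lambda_{\min}\!\left(\mathbf{\Lambda}^{-1/2}\mathbf{U}^{\top}(\mathbf{X}+\mathbf{X}^{\top})\mathbf{U}\mathbf{\Lambda}^{-1/2}\right)\right),\] then $\|\mathbf{I}-\mu\mathbf{X}\|_2<1$.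
   Context: $\tilde{\mathbf{Z}}_n:=\operatorname{diag}(\boldsymbol{\alpha}^* )\mathbf{Z}_n\operatorname{diag}(\boldsymbol{\alpha})$ with $\boldsymbol{\alpha}:=[1~\alpha~\alpha^2]^{\top}$, $\alpha=e^{-j2\pi/3}$; $^*$ is entrywise conjugation and $\mathrm{Im}$ is entrywise. $\mathbf{M}:=\mathbf{T}(\mathbf{I}_3\otimes\mathbf{F})\mathbf{T}^{\top}$, where: the full branch-bus incidence matrix $\tilde{\mathbf{A}}=[\mathbf{a}_0~\mathbf{A}]\in\mathbb{R}^{N\times(N+1)}$ has in row $n$ entry $+1$ at column $\pi_n$, $-1$ at column $n$, zeros elsewhere; $\mathbf{A}$ is the reduced incidence matrix (column of bus $0$ removed); $\mathbf{F}:=-\mathbf{A}^{-1}$; $\mathbf{T}:=[\mathbf{I}_3\otimes\mathbf{e}_1^{\top};\ldots;\mathbf{I}_3\otimes\mathbf{e}_N^{\top}]$ (blocks stacked vertically) with $\mathbf{e}_n$ the $n$-th column of $\mathbf{I}_N$. $\mathrm{bdiag}$ denotes a block diagonal matrix. $\|\cdot\|_2$ is the spectral norm; $\lambda_{\min}$ is the smallest eigenvalue of a symmetric matrix. *)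

(* Defs.v *)
From HB Require Import structures.
From mathcomp Require Import all_boot all_order all_algebra.
From mathcomp Require Import classical_sets reals trigo.
From mathcomp.real_closed Require Import complex mxtens.

Set Implicit Arguments.
Unset Strict Implicit.
Unset Printing Implicit Defensive.

Import Order.TTheory GRing.Theory Num.Theory.
Local Open Scope ring_scope.
Local Open Scope classical_set_scope.

Section Grid.
Variable R : realType.

(* Index conventions: line/bus n (1 <= n <= N) is represented by i : 'I_N with
   n = i.+1; bus 0 is the feeder.  The parent pi_n of bus i.+1 is [par i]
   (a natural number <= i).  Row-stacked / Kronecker indices follow mxtens:
   the index (a, b) of 'I_(m * n) is a * n + b (mxtens_index). *)

Definition inc_full (N : nat) (par : 'I_N -> nat) : 'M[R]_(N, N.+1) :=
  \matrix_(i < N, j < N.+1)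
    ((nat_of_ord j == par i)%:R - (nat_of_ord j == i.+1)%:R).

Definition inc_red (N : nat) (par : 'I_N -> nat) : 'M[R]_N :=
  \matrix_(i < N, j < N) inc_full par i (lift ord0 j).

Definition Fmx (N : nat) (par : 'I_N -> nat) : 'M[R]_N := - invmx (inc_red par).

Definition e_row (N : nat) (n : 'I_N) : 'M[R]_(1, N) := delta_mx 0 n.

(* T := [I_3 (x) e_1^T; ... ; I_3 (x) e_N^T]  (blocks stacked vertically) *)
Definition Tmx (N : nat) : 'M[R]_(N * 3, 3 * N) :=
  \matrix_(k < N * 3, c < 3 * N)
    (tensmx (1%:M : 'M[R]_3) (e_row (mxtens_unindex k).1))
      (mxtens_index ((mxtens_unindex k).2, (ord0 : 'I_1))) c.

Definition Mmx (N : nat) (par : 'I_N -> nat) : 'M[R]_(N * 3) :=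
  Tmx N *m tensmx (1%:M : 'M[R]_3) (Fmx par) *m (Tmx N)^T.

Definition bdiag (N : nat) (B : 'I_N -> 'M[R]_3) : 'M[R]_(N * 3) :=
  \matrix_(k < N * 3, l < N * 3)
    (if (mxtens_unindex k).1 == (mxtens_unindex l).1
     then B (mxtens_unindex k).1 (mxtens_unindex k).2 (mxtens_unindex l).2
     else 0).

Definition alpha : R[i] :=
  Complex (cos (2 * pi / 3)) (- sin (2 * pi / 3)).

Definition alpha_vec : 'rV[R[i]]_3 := \row_(p < 3) alpha ^+ p.

Definition Ztilde (Z : 'M[R[i]]_3) : 'M[R[i]]_3 :=
  diag_mx (map_mx (@conjc R) alpha_vec) *m Z *m diag_mx alpha_vec.

Definition Xmx (N : nat) (par : 'I_N -> nat) (Z : 'I_N -> 'M[R[i]]_3)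
  : 'M[R]_(N * 3) :=
  2%:R *: (Mmx par *m bdiag (fun n => map_mx (@complex.Im R) (Ztilde (Z n)))
           *m (Mmx par)^T).

Definition vnorm (n : nat) (v : 'cV[R]_n) : R := Num.sqrt (\sum_i v i 0 ^+ 2).

Definition spectral_norm (m n : nat) (B : 'M[R]_(m, n)) : R :=
  sup [set vnorm (B *m x) | x in [set x : 'cV[R]_n | vnorm x = 1]].

Definition lambda_min (n : nat) (S : 'M[R]_n) : R :=
  inf [set a : R | eigenvalue S a].

End Grid.

(* Main.v *)
Require Import Defs.
From HB Require Import structures.
From mathcomp Require Import all_boot all_order all_algebra.
From mathcomp Require Import reals trigo.
From mathcomp.real_closed Require Import complex mxtens.
From mathcomp Require Import boolp classical_sets.
From mathcomp Require Import sesquilinear spectral.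
From mathcomp Require Import lra.

Import Order.TTheory GRing.Theory Num.Theory.
Local Open Scope ring_scope.


Lemma sym_eig_bound (R : rcfType) n (S : 'M[R]_n) (c : R) :
  S^T = S -> (forall a, eigenvalue S a -> c < a) ->
  exists2 e : R, 0 < e & forall v : 'cV[R]_n,
     e * (v^T *m v) 0 0 <= (v^T *m S *m v) 0 0 - c * (v^T *m v) 0 0.
Proof.
move=> trS Heig.
pose f := real_complex R.
pose SC := map_mx f S.
have realf x : f x \is Num.real by apply/complex_realP; exists x.
have conjf x : (f x)^* = f x := conj_Creal (realf x).
have herm : SC \is hermsymmx.
  apply/is_hermitianmxP; rewrite expr0 scale1r; apply/matrixP=> i j.
  by rewrite !mxE conjf -{1}trS mxE.
have /orthomx_spectralP Heq := hermitian_normalmx herm.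
have Pu := spectral_unitarymx SC.
move: Heq; set P := spectralmx SC; set sp := spectral_diag SC => Heq.
have PPt : P *m (P^t*)%sesqui = 1%:M by apply/unitarymxP.
have PtP := mulmx1C PPt.
rewrite invmx_unitary // in Heq.
have /mxOverP spreal := hermitian_spectral_diag_real herm.
pose r j := complex.Re (sp 0 j).
have spr j : sp 0 j = f (r j) by rewrite /r /f RRe_real //; apply: spreal.
have eig j : c < r j.
  apply: Heig; rewrite eigenvalue_root_char -(fmorph_root f) map_char_poly.
  rewrite -eigenvalue_root_char; apply/eigenvalueP; exists (row j P).
    rewrite -/SC -row_mul Heq !mulmxA PPt mul1mx mul_diag_mx.
    by apply/rowP=> k; rewrite !mxE spr.
  apply/eqP=> /(congr1 (fun M => M *m (P^t*)%sesqui)).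
  rewrite -row_mul PPt mul0mx row1 => /rowP /(_ j); rewrite !mxE /=.
  by move=> /eqP; rewrite eqxx oner_eq0.

pose e := (1 + \sum_j (r j - c)^-1)^-1.
have rc_pos j : 0 < r j - c by rewrite subr_gt0.
have sum_ge0 : 0 <= \sum_j (r j - c)^-1.
  by apply: sumr_ge0 => j _; rewrite invr_ge0 ltW.
have e_pos : 0 < e by rewrite invr_gt0 ltr_wpDr.
have e_le j : e <= r j - c.
  have Hp : 0 < 1 + \sum_j (r j - c)^-1 by rewrite ltr_wpDr.
  rewrite -[r j - c]invrK lef_pV2; last 2 first.
  - by rewrite posrE.
  - by rewrite posrE invr_gt0.
  rewrite (bigD1 j) //= addrCA lerDl addr_ge0 //.
  by apply: sumr_ge0 => k _; rewrite invr_ge0 ltW.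
exists e; first exact: e_pos.
move=> v.
pose vC := map_mx f v; pose y := P *m vC.
have vCt : (vC^T) = (vC^t*)%sesqui.
  by apply/matrixP=> i j; rewrite !mxE conjf.
have E1 : f ((v^T *m S *m v) 0 0) =
   \sum_k (f (r k) * ((y k 0)^* * y k 0)).
  have -> : f ((v^T *m S *m v) 0 0) = (map_mx f (v^T *m S *m v)) 0 0 by rewrite [in RHS]mxE.
  rewrite !map_mxM -map_trmx -/vC -/SC vCt Heq !mulmxA.
  have -> : (vC^t*)%sesqui *m (P^t*)%sesqui = (y^t*)%sesqui.
    by rewrite /y trmx_mul map_mxM.
  rewrite -[_ *m P *m vC]mulmxA -/y mul_mx_diag mxE.
  by apply: eq_bigr => k _; rewrite !mxE spr mulrCA mulrA.
have E2 : f ((v^T *m v) 0 0) = \sum_k ((y k 0)^* * y k 0).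
  have -> : f ((v^T *m v) 0 0) = (map_mx f (v^T *m v)) 0 0 by rewrite [in RHS]mxE.
  rewrite !map_mxM -map_trmx -/vC vCt.
  rewrite -{2}(mul1mx vC) -PtP !mulmxA.
  have -> : (vC^t*)%sesqui *m (P^t*)%sesqui = (y^t*)%sesqui.
    by rewrite /y trmx_mul map_mxM.
  rewrite -mulmxA -/y mxE.
  by apply: eq_bigr => k _; rewrite !mxE.
rewrite -subr_ge0 -ler0c.
have -> : ((v^T *m S *m v) 0 0 - c * (v^T *m v) 0 0 - e * (v^T *m v) 0 0)%:C%C
  = f ((v^T *m S *m v) 0 0) - f c * f ((v^T *m v) 0 0) - f e * f ((v^T *m v) 0 0).
  by rewrite /f !rmorphB !rmorphM.
rewrite E1 E2 !mulr_sumr -!sumrB; apply: sumr_ge0 => k _.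
rewrite -!mulrBl; apply: mulr_ge0; last by rewrite mulrC mul_conjC_ge0.
by rewrite -!rmorphB /f ler0c subr_ge0 lerBrDl addrC -lerBrDr e_le.
Qed.

Section Aux.
Variable R : realType.

Lemma trmx11 (M : 'M[R]_1) : M^T = M.
Proof. by apply/matrixP=> i j; rewrite !ord1 mxE. Qed.

Lemma dotC n (u v : 'cV[R]_n) : u^T *m v = v^T *m u.
Proof. by rewrite -[LHS]trmx11 trmx_mul trmxK. Qed.

Lemma q_sum n (v : 'cV[R]_n) : (v^T *m v) 0 0 = \sum_i v i 0 ^+ 2.
Proof. by rewrite mxE; apply: eq_bigr => i _; rewrite mxE expr2. Qed.

Lemma q_ge0 n (v : 'cV[R]_n) : 0 <= (v^T *m v) 0 0.
Proof. by rewrite q_sum; apply: sumr_ge0 => i _; rewrite sqr_ge0. Qed.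

Lemma amgm n (u v : 'cV[R]_n) :
  2 * (u^T *m v) 0 0 <= (u^T *m u) 0 0 + (v^T *m v) 0 0.
Proof.
rewrite !q_sum mxE mulr_sumr -big_split /=; apply: ler_sum => i _.
rewrite mxE; have := sqr_ge0 (u i 0 - v i 0); nra.
Qed.

Lemma q_sub n (u v : 'cV[R]_n) t :
  ((u - t *: v)^T *m (u - t *: v)) 0 0 =
  (u^T *m u) 0 0 - 2 * t * (u^T *m v) 0 0 + t ^+ 2 * (v^T *m v) 0 0.
Proof.
have -> : (u - t *: v)^T = u^T - t *: v^T by apply/matrixP=> i j; rewrite !mxE.
rewrite mulmxBl !mulmxBr -!scalemxAl -!scalemxAr.
rewrite [v^T *m u]dotC scalerA.
set a := u^T *m u; set b := u^T *m v; set c := v^T *m v.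
rewrite !mxE; lra.
Qed.

End Aux.

Section Main.
Variable R : realType.

Lemma main_gen n (X U : 'M[R]_n) (d : 'I_n -> R) (mu : R) (S : 'M[R]_n)
  (A : 'M[R]_n) :
  U^T *m U = 1%:M ->
  (forall k, 0 < d k) ->
  X *m X^T = U *m diag_mx (\row_k d k) *m U^T ->
  0 < mu ->
  S = diag_mx (\row_k (Num.sqrt (d k))^-1) *m U^T
            *m (X + X^T) *m U
            *m diag_mx (\row_k (Num.sqrt (d k))^-1) ->
  mu < inf [set a : R | eigenvalue S a] ->
  A = 1%:M - mu *: X ->
  exists2 b : R, b < 1 & forall x : 'cV[R]_n,
    (x^T *m x) 0 0 = 1 -> Num.sqrt (((A *m x)^T *m (A *m x)) 0 0) <= b.
Proof.
move=> UtU dpos XXt mupos Sdef hmu Adef.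
have UUt := mulmx1C UtU.
pose D := diag_mx (\row_k (Num.sqrt (d k))^-1).
pose Dh := diag_mx (\row_k (Num.sqrt (d k))).
have sqpos k : 0 < Num.sqrt (d k) by rewrite sqrtr_gt0.
have DDh : D *m Dh = 1%:M.
  rewrite mulmx_diag; apply/matrixP=> i j; rewrite !mxE.
  by case: eqP => // _; rewrite mulVf // gt_eqF.
have trD : D^T = D by rewrite tr_diag_mx.
have trDh : Dh^T = Dh by rewrite tr_diag_mx.
have DhDh : Dh *m Dh = diag_mx (\row_k d k).
  rewrite mulmx_diag; congr diag_mx; apply/rowP=> k; rewrite !mxE.
  by rewrite -expr2 sqr_sqrtr // ltW.
have trS : S^T = S.
  rewrite Sdef !trmx_mul trD trmxK !mulmxA; congr (_ *m _ *m _).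
  rewrite -!mulmxA; congr (_ *m (_ *m _)).
  by apply/matrixP=> i j; rewrite !mxE addrC.
have Heig : forall a, eigenvalue S a -> mu < a.
  move=> a Ha; have [hl|hl] := pselect (has_lbound [set a : R | eigenvalue S a]).
    by apply: (lt_le_trans hmu); apply: ge_inf.
  move: hmu; rewrite inf_out; first by rewrite ltNge ltW.
  by case.
have [eps eps_pos Heps] := @sym_eig_bound R _ S mu trS Heig.
pose dm := (1 + \sum_k (d k)^-1)^-1.
have sum_ge0 : 0 <= \sum_k (d k)^-1.
  by apply: sumr_ge0 => k _; rewrite invr_ge0 ltW.
have dm_pos : 0 < dm by rewrite invr_gt0 ltr_wpDr.
have dm_le k : dm <= d k.
  have Hp : 0 < 1 + \sum_k (d k)^-1 by rewrite ltr_wpDr.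
  rewrite -[d k]invrK lef_pV2; last 2 first.
  - by rewrite posrE.
  - by rewrite posrE invr_gt0.
  rewrite (bigD1 k) //= addrCA lerDl addr_ge0 //.
  by apply: sumr_ge0 => j _; rewrite invr_ge0 ltW.
pose kap := eps * dm.
have kap_pos : 0 < kap by rewrite mulr_gt0.
have Hkey : forall y : 'cV[R]_n,
    kap * (y^T *m y) 0 0 <=
    2 * (y^T *m (X^T *m y)) 0 0 - mu * ((X^T *m y)^T *m (X^T *m y)) 0 0.
  move=> y; pose z := U^T *m y; pose w := Dh *m z.
  have Dw : D *m w = z by rewrite /w mulmxA DDh mul1mx.
  have qz : (z^T *m z) = y^T *m y.
    by rewrite /z trmx_mul trmxK mulmxA -[y^T *m U *m U^T]mulmxA UUt mulmx1.
  have wSw : w^T *m S *m w = y^T *m (X + X^T) *m y.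
    rewrite Sdef -/D.
    have -> : w^T *m (D *m U^T *m (X + X^T) *m U *m D) *m w
       = (D *m w)^T *m U^T *m (X + X^T) *m U *m (D *m w).
      by rewrite [(D *m w)^T]trmx_mul trD !mulmxA.
    rewrite Dw /z trmx_mul trmxK !mulmxA -[y^T *m U *m U^T]mulmxA UUt mulmx1.
    by rewrite -[_ *m U *m U^T]mulmxA UUt mulmx1.
  have ww : w^T *m w = (X^T *m y)^T *m (X^T *m y).
    rewrite /w trmx_mul trDh mulmxA -[z^T *m Dh *m Dh]mulmxA DhDh.
    rewrite [(X^T *m y)^T]trmx_mul trmxK mulmxA -[y^T *m X *m X^T]mulmxA XXt.
    by rewrite /z trmx_mul trmxK !mulmxA.
  have wlow : dm * (y^T *m y) 0 0 <= (w^T *m w) 0 0.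
    rewrite -qz !q_sum mulr_sumr; apply: ler_sum => k _.
    rewrite /w mul_diag_mx !mxE exprMn sqr_sqrtr; last exact: ltW.
    by apply: ler_wpM2r; [apply: sqr_ge0 | apply: dm_le].
  have := Heps w; rewrite wSw ww.
  have -> : (y^T *m (X + X^T) *m y) 0 0 = 2 * (y^T *m (X^T *m y)) 0 0.
    rewrite mulmxDr mulmxDl mxE mulmxA.
    rewrite -[(y^T *m X *m y)]trmx11 !trmx_mul trmxK mulmxA; lra.
  move=> H; apply: le_trans H.
  rewrite /kap -mulrA; apply: ler_wpM2l; first exact: ltW.
  by rewrite -ww.
have HAt : forall y : 'cV[R]_n,
   ((A^T *m y)^T *m (A^T *m y)) 0 0 <= (1 - mu * kap) * (y^T *m y) 0 0.
  move=> y.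
  have -> : A^T *m y = y - mu *: (X^T *m y).
    rewrite Adef; have -> : (1%:M - mu *: X)^T = 1%:M - mu *: X^T.
      by apply/matrixP=> i j; rewrite !mxE eq_sym.
    by rewrite mulmxBl mul1mx -scalemxAl.
  rewrite q_sub; have := Hkey y; have := @q_ge0 R _ (X^T *m y); nra.
pose b := (1 + (1 + mu * kap)^-1) / 2.
have mk_pos : 0 < mu * kap by rewrite mulr_gt0.
have inv_lt1 : (1 + mu * kap)^-1 < 1.
  by rewrite invf_lt1 ?ltrDl // ltr_wpDr // ltW.
exists b.
  rewrite /b; lra.
move=> x hx.
set s := ((A *m x)^T *m (A *m x)) 0 0.
have s_ge0 : 0 <= s by apply: (@q_ge0 R).
have hs : s * (1 + mu * kap) <= 1.
  have h1 := @amgm R _ x (A^T *m (A *m x)).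
  have h2 := HAt (A *m x).
  have e1 : (x^T *m (A^T *m (A *m x))) 0 0 = s.
    by rewrite /s trmx_mul !mulmxA.
  rewrite e1 hx in h1; rewrite -/s in h2.
  have := mk_pos; nra.
have hs' : s <= (1 + mu * kap)^-1.
  have hp : 0 < 1 + mu * kap by rewrite ltr_wpDr // ltW.
  by rewrite -[_^-1]mul1r ler_pdivlMr.
apply: (@le_trans _ _ ((1 + s) / 2)).
  have := sqrtr_ge0 s; have := sqr_sqrtr s_ge0.
  have := sqr_ge0 (Num.sqrt s - 1); nra.
rewrite /b; lra.
Qed.

End Main.

Theorem proposition6 (R : realType) (N : nat) (par : 'I_N -> nat)
  (Z : 'I_N -> 'M[R[i]]_3)
  (U : 'M[R]_(N * 3)) (d : 'I_(N * 3) -> R) (mu : R) :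
  (forall n : 'I_N, par n <= n)%N ->
  (forall n : 'I_N, (Z n)^T = Z n) ->
  Xmx par Z \in unitmx ->
  U^T *m U = 1%:M ->
  (forall k, 0 < d k) ->
  Xmx par Z *m (Xmx par Z)^T = U *m diag_mx (\row_k d k) *m U^T ->
  0 < mu ->
  mu < lambda_min
         (diag_mx (\row_k (Num.sqrt (d k))^-1) *m U^T
            *m (Xmx par Z + (Xmx par Z)^T) *m U
            *m diag_mx (\row_k (Num.sqrt (d k))^-1)) ->
  spectral_norm (1%:M - mu *: Xmx par Z) < 1.
Proof.
move=> _ _ _ UtU dpos XXt mupos hmu.
have [b b_lt1 Hb] := @main_gen R _ _ _ _ _ _ _ UtU dpos XXt mupos erefl hmu erefl.
rewrite /spectral_norm.
set E := (X in sup X).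
have [->|/set0P [r Er]] := eqVneq E set0.
  by rewrite sup0.
apply: (@le_lt_trans _ _ b) => //.
apply: ge_sup; first by exists r.
move=> _ [x hx <-].
rewrite /vnorm -q_sum; apply: Hb.
move: hx; rewrite /= /vnorm -q_sum => hx.
have h0 := @q_ge0 R _ x.
by rewrite -(sqr_sqrtr h0) hx expr1n.
Qed.
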